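(* Let $X=(X_1,\dots,X_p)\in\mathbb{R}^p$ satisfy $X\sim\mathcal{N}(0,\Sigma)$ with $\Sigma$ positive definite, and let $Y$ be a real random variable with $\mathbb{E}Y^2<\infty$, jointly distributed with $X$. Let $\beta^*=\arg\min_{w\in\mathbb{R}^p}\mathbb{E}[Y-X^\top w]^2=\Sigma^{-1}\mathbb{E}(XY)$, and for $j\in[p]$ let $\beta^{(j)}=\arg\min_{w\in\mathbb{R}^{p-1}}\mathbb{E}[Y-X_{-j}^\top w]^2$, where $X_{-j}\in\mathbb{R}^{p-1}$ is $X$ with its $j$-th coordinate removed and $\beta^*_{-j}\in\mathbb{R}^{p-1}$ is $\beta^*$ with its $j$-th entry removed. Define the population dropout and retraining variable importance estimates (with negative mean squared error as predictive skill, restricted to linear predictors) $$\widehat{\mathrm{VI}}^{(\mathrm{DR})}_j=\mathbb{E}[Y-X_{-j}^\top\beta^*_{-j}]^2-\mathbb{E}[Y-X^\top\beta^*]^2,\qquad \widehat{\mathrm{VI}}^{(\mathrm{RT})}_j=\mathbb{E}[Y-X_{-j}^\top\beta^{(j)}]^2-\mathbb{E}[Y-X^\top\beta^*]^2 .$$ Then $$\widehat{\mathrm{VI}}^{(\mathrm{DR})}_j-\widehat{\mathrm{VI}}^{(\mathrm{RT})}_j=\frac{\gamma_j^\top\Sigma_{(j)}^{-1}\gamma_j}{(\Sigma_{jj}-\gamma_j^\top\Sigma_{(j)}^{-1}\gamma_j)^2}\Big[\mathbb{E}(X_jY)-\gamma_j^\top\Sigma_{(j)}^{-1}\mathbb{E}(X_{-j}Y)\Big]^2,$$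 where $\gamma_j=\mathbb{E}(X_jX_{-j})\in\mathbb{R}^{p-1}$ and $\Sigma_{(j)}=\mathbb{E}(X_{-j}X_{-j}^\top)\in\mathbb{R}^{(p-1)\times(p-1)}$ is $\Sigma$ with its $j$-th row and column removed.
   Context: The dropout method predicts $Y$ from $X_{-j}$ by plugging the full linear model with $X_j$ replaced by its mean $0$, i.e. uses $X_{-j}^\top\beta^*_{-j}$; the retraining method refits a linear model on $X_{-j}$, i.e. uses $X_{-j}^\top\beta^{(j)}$. *)

(* Defs.v *)
From HB Require Import structures.
From mathcomp Require Import all_boot all_order all_algebra.
From mathcomp Require Import all_classical all_reals all_analysis.
Set Implicit Arguments. Unset Strict Implicit. Unset Printing Implicit Defensive.
Import Order.TTheory GRing.Theory Num.Theory.
Local Open Scope classical_set_scope.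
Local Open Scope ring_scope.

(* Real-valued expectation E[f] of a real function f on the probability space
   (the library expectation 'E_P[f] is extended-real; all expectations used
   below are finite under the hypotheses). *)
Definition Ex d (T : measurableType d) (R : realType) (P : probability T R)
  (f : T -> R) : R := fine ('E_P[f])%E.

Definition lincomb d (T : measurableType d) (R : realType) (m : nat)
  (X : 'I_m -> T -> R) (w : 'cV[R]_m) : T -> R :=
  fun t => \sum_(i < m) w i 0 * X i t.

Definition sqloss d (T : measurableType d) (R : realType) (P : probability T R)
  (m : nat) (X : 'I_m -> T -> R) (Y : T -> R) (w : 'cV[R]_m) : R :=
  Ex P (fun t => (Y t - lincomb X w t) ^+ 2).

Definition is_argmin_sqloss d (T : measurableType d) (R : realType)
  (P : probability T R) (m : nat) (X : 'I_m -> T -> R) (Y : T -> R)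
  (w : 'cV[R]_m) : Prop :=
  forall v : 'cV[R]_m, sqloss P X Y w <= sqloss P X Y v.

Definition posdef (R : realType) (m : nat) (M : 'M[R]_m) : Prop :=
  M^T = M /\ forall v : 'cV[R]_m, v != 0 -> 0 < (v^T *m M *m v) 0 0.

Definition second_moment d (T : measurableType d) (R : realType)
  (P : probability T R) (m : nat) (X : 'I_m -> T -> R) : 'M[R]_m :=
  \matrix_(i, k) Ex P (fun t => X i t * X k t).

(* X ~ N(0, Sigma) (Sigma positive definite), via Cramer–Wold:
   for every nonzero w, X^T w has law N(0, w^T Sigma w). *)
Definition centered_gaussian d (T : measurableType d) (R : realType)
  (P : probability T R) (m : nat) (X : 'I_m -> T -> R) (Sigma : 'M[R]_m) : Prop :=
  forall w : 'cV[R]_m, w != 0 ->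
    forall A : set R, measurable A ->
      P (lincomb X w @^-1` A) =
      normal_prob 0 (Num.sqrt ((w^T *m Sigma *m w) 0 0)) A.

Definition drop_rv d (T : measurableType d) (R : realType) (n : nat)
  (j : 'I_n.+1) (X : 'I_n.+1 -> T -> R) : 'I_n -> T -> R :=
  fun i => X (lift j i).

Definition drop_vec (R : realType) (n : nat) (j : 'I_n.+1) (w : 'cV[R]_n.+1)
  : 'cV[R]_n := \col_i w (lift j i) 0.

(* Main.v *)
Require Import Defs.
From HB Require Import structures.
From mathcomp Require Import all_boot all_order all_algebra.
From mathcomp Require Import all_classical all_reals all_analysis.
From mathcomp Require Import ring lra.
Import Order.TTheory GRing.Theory Num.Theory.
Local Open Scope classical_set_scope.
Local Open Scope ring_scope.

Section S.
Context (R : realType) (d : measure_display) (T : measurableType d) (P : probability T R).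

Section Lp.
Context (p : \bar R) (p1 : (1 <= p)%E).
Lemma LpZD (f g : T -> R) k : f \in Lfun P p -> g \in Lfun P p -> (fun t => k * f t + g t) \in Lfun P p.
Proof. move=> hf hg. have := (@Lfun_submod_closed _ _ _ P _ p1).2 k f g hf hg. by []. Qed.
Lemma Lp0 : (fun t : T => 0 : R) \in Lfun P p.
Proof. exact: (@Lfun_submod_closed _ _ _ P _ p1).1. Qed.
Lemma LpD (f g : T -> R) : f \in Lfun P p -> g \in Lfun P p -> (fun t => f t + g t) \in Lfun P p.
Proof. move=> hf hg. have := LpZD f g 1 hf hg. by under eq_fun do rewrite mul1r. Qed.
Lemma LpZ (f : T -> R) k : f \in Lfun P p -> (fun t => k * f t) \in Lfun P p.
Proof. move=> hf. have := LpZD f _ k hf Lp0. by under eq_fun do rewrite addr0. Qed.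
End Lp.

Lemma le11 : (1 <= (1 : \bar R))%E. Proof. by []. Qed.

Lemma ExD (f g : T -> R) : f \in Lfun P 1 -> g \in Lfun P 1 ->
  Ex P (fun t => f t + g t) = Ex P f + Ex P g.
Proof.
move=> hf hg; rewrite /Ex.
have -> := expectationD hf hg.
by rewrite fineD // expectation_fin_num.
Qed.

Lemma ExZ (f : T -> R) k : f \in Lfun P 1 -> Ex P (fun t => k * f t) = k * Ex P f.
Proof.
move=> hf; rewrite /Ex.
have := expectationZl k hf.
have -> : (k \o* f) = (fun t => k * f t) by apply: funext => t /=; rewrite mulrC.
move=> ->.
by rewrite fineM // expectation_fin_num.
Qed.

Lemma Ex0 : Ex P (fun _ => 0) = 0.
Proof. by rewrite /Ex expectation_cst. Qed.

Lemma L1sum (I : Type) (r : seq I) (F : I -> T -> R) :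
  (forall i, F i \in Lfun P 1) -> (fun t => \sum_(i <- r) F i t) \in Lfun P 1.
Proof.
move=> hF; elim: r => [|a r IH].
  under eq_fun do rewrite big_nil. exact: Lp0 le11.
under eq_fun do rewrite big_cons. exact: LpD le11 _ _ (hF a) IH.
Qed.

Lemma Exsum (I : Type) (r : seq I) (F : I -> T -> R) :
  (forall i, F i \in Lfun P 1) -> Ex P (fun t => \sum_(i <- r) F i t) = \sum_(i <- r) Ex P (F i).
Proof.
move=> hF; elim: r => [|a r IH].
  under eq_fun do rewrite big_nil. by rewrite big_nil Ex0.
under eq_fun do rewrite big_cons. by rewrite big_cons ExD ?IH // L1sum.
Qed.

Lemma L2_of_sq (Y : {RV P >-> R}) : ('E_P[(fun t => (Y t ^+ 2)%R)] < +oo)%E ->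
  (Y : T -> R) \in Lfun P 2%:E.
Proof.
move=> hY; rewrite inE; apply/andP; split.
  exact: mfunP.
rewrite inE /= /finite_norm unlock /Lnorm.
apply: poweR_lty.
move: hY; rewrite unlock.
suff -> : (fun x => `|(EFin \o Y) x| `^ 2)%E = (fun x => ((Y x ^+ 2)%R)%:E) by [].
apply: funext => x /=.
by rewrite powR_mulrn // real_normK // num_real.
Qed.

Lemma sqloss_quad m (X : 'I_m -> T -> R) (Y : T -> R) (w : 'cV[R]_m) :
  (forall i, X i \in Lfun P 2%:E) -> Y \in Lfun P 2%:E ->
  sqloss P X Y w = Ex P (fun t => Y t * Y t)
    + (-2 * \sum_i w i 0 * Ex P (fun t => X i t * Y t)
       + \sum_i \sum_k w i 0 * Ex P (fun t => X i t * X k t) * w k 0).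
Proof.
move=> hX hY; rewrite /sqloss /lincomb.
have -> : (fun t => (Y t - \sum_i w i 0 * X i t) ^+ 2) =
  (fun t => Y t * Y t + (\sum_i (-2 * w i 0) * (X i t * Y t)
     + \sum_i \sum_k (w i 0 * w k 0) * (X i t * X k t))).
  apply: funext => t.
  have e1 : \sum_i (-2 * w i 0) * (X i t * Y t) = -2 * ((\sum_i w i 0 * X i t) * Y t).
    by rewrite mulr_suml mulr_sumr; apply: eq_bigr => i _; ring.
  have e2 : \sum_i \sum_k (w i 0 * w k 0) * (X i t * X k t) =
      (\sum_i w i 0 * X i t) * (\sum_i w i 0 * X i t).
    rewrite mulr_suml; apply: eq_bigr => i _; rewrite mulr_sumr; apply: eq_bigr => k _; ring.
  rewrite e1 e2; ring.
have hXY : forall i, (fun t => X i t * Y t) \in Lfun P 1 by move=> i; exact: Lfun2_mul_Lfun1.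
have hXX : forall i k, (fun t => X i t * X k t) \in Lfun P 1 by move=> i k; exact: Lfun2_mul_Lfun1.
have h1 : forall i, (fun t => (-2 * w i 0) * (X i t * Y t)) \in Lfun P 1.
  by move=> i; apply: LpZ le11 _ _ (hXY i).
have h2 : forall i k, (fun t => (w i 0 * w k 0) * (X i t * X k t)) \in Lfun P 1.
  by move=> i k; apply: LpZ le11 _ _ (hXX i k).
have h3 : forall i, (fun t => \sum_k (w i 0 * w k 0) * (X i t * X k t)) \in Lfun P 1.
  by move=> i; apply: L1sum => k; exact: h2.
rewrite ExD; last first.
- apply: LpD le11 _ _ _ _; apply: L1sum => i; [exact: h1 | exact: h3].
- exact: Lfun2_mul_Lfun1.
rewrite ExD; last first.
- by apply: L1sum => i; exact: h3.
- by apply: L1sum => i; exact: h1.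
rewrite Exsum // Exsum //; congr (_ + (_ + _)).
  rewrite mulr_sumr; apply: eq_bigr => i _; rewrite ExZ //; ring.
apply: eq_bigr => i _; rewrite Exsum //; apply: eq_bigr => k _; rewrite ExZ //; ring.
Qed.
End S.
Section LA.
Context (R : realType) (n : nat).

Lemma tr11 (A : 'M[R]_1) : A^T = A.
Proof. by apply/matrixP => i k; rewrite !ord1 mxE. Qed.

Lemma e00B (A B : 'M[R]_1) : (A - B) 0 0 = A 0 0 - B 0 0.
Proof. by rewrite !mxE. Qed.
Lemma e00D (A B : 'M[R]_1) : (A + B) 0 0 = A 0 0 + B 0 0.
Proof. by rewrite !mxE. Qed.
Lemma e00Z k (A : 'M[R]_1) : (k *: A) 0 0 = k * A 0 0.
Proof. by rewrite !mxE. Qed.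
Lemma e00N (A : 'M[R]_1) : (- A) 0 0 = - A 0 0.
Proof. by rewrite !mxE. Qed.

Lemma bil_sym m (S : 'M[R]_m) (a c : 'cV[R]_m) : S^T = S ->
  (a^T *m S *m c) 0 0 = (c^T *m S *m a) 0 0.
Proof.
move=> hS; transitivity ((a^T *m S *m c)^T 0 0); first by rewrite [RHS]mxE.
by rewrite !trmx_mul trmxK hS mulmxA.
Qed.
Arguments bil_sym {m}.

Lemma Qdiff (S : 'M[R]_n) (bp w wj : 'cV[R]_n) : S^T = S -> S *m wj = bp ->
 (-2 * (w^T *m bp) 0 0 + (w^T *m S *m w) 0 0) - (-2 * (wj^T *m bp) 0 0 + (wj^T *m S *m wj) 0 0)
 = ((w - wj)^T *m S *m (w - wj)) 0 0.
Proof.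
move=> hS <-.
rewrite !mulmxA.
have -> : (w - wj)^T = w^T - wj^T by apply/matrixP => i k; rewrite !mxE.
rewrite !mulmxBl !e00B !mulmxBr !e00B (bil_sym S wj w hS). ring.
Qed.

Lemma bil_sum m (a c : 'cV[R]_m) (M : 'M[R]_m) :
  (a^T *m M *m c) 0 0 = \sum_i \sum_k a i 0 * M i k * c k 0.
Proof.
rewrite mxE; under eq_bigr do rewrite mxE big_distrl /=.
rewrite exchange_big /=; apply: eq_bigr => i _; apply: eq_bigr => k _.
by rewrite !mxE.
Qed.

Lemma dot_sum m (a c : 'cV[R]_m) : (a^T *m c) 0 0 = \sum_i a i 0 * c i 0.
Proof. by rewrite mxE; apply: eq_bigr => i _; rewrite mxE. Qed.

Definition ext (j : 'I_n.+1) (c : R) (u : 'cV[R]_n) : 'cV[R]_n.+1 :=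
  \col_a (if unlift j a is Some i then u i 0 else c).

Lemma ext_quad (M : 'M[R]_n.+1) j c u : M^T = M ->
  ((ext j c u)^T *m M *m ext j c u) 0 0 =
  c ^+ 2 * M j j + 2 * c * ((\col_i M j (lift j i))^T *m u) 0 0
  + (u^T *m (\matrix_(i, k) M (lift j i) (lift j k)) *m u) 0 0.
Proof.
move=> hM.
have sym : forall a b, M a b = M b a.
  by move=> a b; rewrite -{1}hM mxE.
have e1 : ext j c u j 0 = c by rewrite mxE unlift_none.
have e2 : forall i, ext j c u (lift j i) 0 = u i 0 by move=> i; rewrite mxE liftK.
have sp : forall F : 'I_n.+1 -> R, \sum_a F a = F j + \sum_i F (lift j i).
  by move=> F; rewrite (bigD1_ord j).
rewrite !bil_sum dot_sum sp sp !e1.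
under eq_bigr do rewrite e2.
under [X in _ + X = _]eq_bigr do rewrite sp e2 e1.
under [X in _ + X = _]eq_bigr do under eq_bigr do rewrite e2.
under [in RHS]eq_bigr do rewrite mxE.
rewrite [X in _ + X = _]big_split /=.
under [X in _ = _ + X]eq_bigr do under eq_bigr do rewrite mxE.
have h : \sum_i u i 0 * M (lift j i) j * c = c * \sum_i M j (lift j i) * u i 0.
  by rewrite mulr_sumr; apply: eq_bigr => i _; rewrite sym; ring.
have h2 : \sum_i c * M j (lift j i) * u i 0 = c * \sum_i M j (lift j i) * u i 0.
  by rewrite mulr_sumr; apply: eq_bigr => i _; ring.
rewrite h h2; ring.
Qed.

Definition subm (M : 'M[R]_n.+1) j : 'M[R]_n := \matrix_(i, k) M (lift j i) (lift j k).
Definition gam (M : 'M[R]_n.+1) j : 'cV[R]_n := \col_i M j (lift j i).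

Lemma ext_neq0 j c u : (c != 0) || (u != 0) -> ext j c u != 0.
Proof.
case/orP => h; apply: contraNneq h => /matrixP h.
  by have := h j 0; rewrite !mxE unlift_none => ->.
apply/eqP/matrixP => i k; rewrite ord1 !mxE.
by have := h (lift j i) 0; rewrite !mxE liftK.
Qed.

Lemma sym_entry (M : 'M[R]_n.+1) a b : M^T = M -> M a b = M b a.
Proof. by move=> hM; rewrite -{1}hM mxE. Qed.

Lemma posdef_sub (M : 'M[R]_n.+1) j : posdef M -> posdef (subm M j).
Proof.
case=> hM hp; split.
  by apply/matrixP => i k; rewrite !mxE (sym_entry _ _ _ hM).
move=> v hv; have hv' : ext j 0 v != 0 by apply: ext_neq0; rewrite hv orbT.
have := hp _ hv'; rewrite ext_quad //.
by rewrite expr0n /= mul0r mulr0 mul0r !add0r.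
Qed.

Lemma posdef_unit (S : 'M[R]_n) : posdef S -> S \in unitmx.
Proof.
case=> hS hp; rewrite -row_free_unit -kermx_eq0; apply/rowV0P => v /sub_kermxP hv.
case: (eqVneq v 0) => // hne.
have hne' : v^T != 0 by rewrite trmx_eq0.
have := hp _ hne'; rewrite trmxK hv mul0mx mxE ltxx //.
Qed.

Lemma schur (M : 'M[R]_n.+1) j : posdef M ->
  0 < M j j - ((gam M j)^T *m invmx (subm M j) *m gam M j) 0 0.
Proof.
move=> pM; have [hM hp] := pM.
have [hS _] := posdef_sub M j pM.
have uS := @posdef_unit _ (posdef_sub M j pM).
set u := invmx (subm M j) *m gam M j.
have hv : ext j 1 (- u) != 0 by apply: ext_neq0; rewrite oner_neq0.
have := hp _ hv; rewrite ext_quad //.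
rewrite -/(gam M j) -/(subm M j).
have e1 : ((gam M j)^T *m - u) 0 0 = - ((gam M j)^T *m invmx (subm M j) *m gam M j) 0 0.
  by rewrite mulmxN mulmxA e00N.
have e2 : ((- u)^T *m subm M j *m - u) 0 0 = ((gam M j)^T *m invmx (subm M j) *m gam M j) 0 0.
  have -> : (- u)^T = - u^T by apply/matrixP => a b; rewrite !mxE.
  rewrite mulNmx mulmxN mulNmx opprK -mulmxA /u mulKVmx //.
  by rewrite trmx_mul trmx_inv hS.
rewrite e1 e2 expr1n mul1r mulr1.
set q := (_ 0 0); set s := M j j.
suff -> : s - q = s + 2 * - q + q by [].
by rewrite mulrN; ring.
Qed.

Definition Qf m (M : 'M[R]_m) (b w : 'cV[R]_m) := -2 * (w^T *m b) 0 0 + (w^T *m M *m w) 0 0.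
Arguments Qf {m}.

Lemma foc m (M : 'M[R]_m) b w : M^T = M -> (forall v, Qf M b w <= Qf M b v) -> M *m w = b.
Proof.
move=> hM hmin; have [u uE] : {u | u = M *m w - b} by exists (M *m w - b).
have key : forall t, Qf M b (w - t *: u) - Qf M b w =
    - 2 * t * (u^T *m u) 0 0 + t ^+ 2 * (u^T *m M *m u) 0 0.
  move=> t; rewrite /Qf.
  have -> : (w - t *: u)^T = w^T - t *: u^T by apply/matrixP => a c; rewrite !mxE.
  rewrite !mulmxBl !mulmxBr -!scalemxAl -!scalemxAr !e00B !e00Z (bil_sym M u w hM).
  have -> : (u^T *m u) 0 0 = (u^T *m M *m w) 0 0 - (u^T *m b) 0 0.
    by rewrite {2}uE mulmxBr mulmxA e00B.
  rewrite (bil_sym M u w hM); ring.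
set a := (u^T *m u) 0 0; set c := (u^T *m M *m u) 0 0.
have aE : a = \sum_i u i 0 * u i 0 by rewrite /a dot_sum.
have a0 : 0 <= a by rewrite aE; apply: sumr_ge0 => i _; rewrite -expr2 sqr_ge0.
have a_eq0 : a = 0.
  have hc1 : 0 < `|c| + 1 by have := normr_ge0 c; lra.
  set t := a / (`|c| + 1).
  have ht0 : 0 <= t by rewrite /t divr_ge0 // ltW.
  have htc : t * (`|c| + 1) = a by rewrite /t divfK // gt_eqF.
  have h := hmin (w - t *: u); rewrite -subr_ge0 key in h.
  have hcc : t ^+ 2 * c <= t ^+ 2 * `|c| by rewrite ler_wpM2l ?sqr_ge0 ?ler_norm.
  have e : t * `|c| = a - t by move: htc; rewrite mulrDr mulr1 => htc; rewrite -htc; ring.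
  have e2 : t ^+ 2 * `|c| = t * a - t ^+ 2 by rewrite expr2 -mulrA e; ring.
  have e3 : - 2 * t * a = - 2 * (t * a) by ring.
  have ta : 0 <= t * a by rewrite mulr_ge0.
  rewrite e3 in h; rewrite e2 in hcc.
  rewrite -/c in h.
  have ht : t ^+ 2 <= 0 by lra.
  have : t = 0.
    by apply/eqP; rewrite -sqrf_eq0 eq_le ht sqr_ge0.
  by move=> t0; rewrite -htc t0 mul0r.
have u0 : u = 0.
  apply/matrixP => i k; rewrite ord1 mxE.
  have hs : \sum_(i0 | predT i0) u i0 0 * u i0 0 = 0 by rewrite -aE.
  have hp : forall i0, predT i0 -> 0 <= u i0 0 * u i0 0 by move=> i0 _; rewrite -expr2 sqr_ge0.
  have := @psumr_eq0P _ _ _ _ hp hs i isT.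
  by move/eqP; rewrite mulf_eq0 orbb => /eqP.
by apply/eqP; rewrite -subr_eq0 -uE u0.
Qed.

Lemma final (M : 'M[R]_n.+1) j (b beta : 'cV[R]_n.+1) (betaj : 'cV[R]_n) :
  posdef M -> M *m beta = b -> subm M j *m betaj = \col_i b (lift j i) 0 ->
  Qf (subm M j) (\col_i b (lift j i) 0) (\col_i beta (lift j i) 0)
  - Qf (subm M j) (\col_i b (lift j i) 0) betaj =
  ((gam M j)^T *m invmx (subm M j) *m gam M j) 0 0
   / (M j j - ((gam M j)^T *m invmx (subm M j) *m gam M j) 0 0) ^+ 2 *
  (b j 0 - ((gam M j)^T *m invmx (subm M j) *m \col_i b (lift j i) 0) 0 0) ^+ 2.
Proof.
move=> pM hb hbj.
have [hM _] := pM.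
have [hS _] := posdef_sub M j pM.
have uS := @posdef_unit _ (posdef_sub M j pM).
have hsq := schur M j pM.
have sp : forall F : 'I_n.+1 -> R, \sum_a F a = F j + \sum_i F (lift j i).
  by move=> F; rewrite (bigD1_ord j).
move: hsq hbj; set S := subm M j; set g := gam M j; set bp := \col_i b (lift j i) 0.
set bt := \col_i beta (lift j i) 0; set x := beta j 0 => hsq hbj.
have R1 : M j j * x + (g^T *m bt) 0 0 = b j 0.
  rewrite -hb [RHS]mxE sp dot_sum; congr (_ + _); apply: eq_bigr => i _; rewrite !mxE //.
have R2 : S *m bt + x *: g = bp.
  apply/matrixP => i k; rewrite ord1 !mxE -hb mxE sp addrC; congr (_ + _).
    by rewrite (sym_entry _ _ _ hM) mulrC.
  by apply: eq_bigr => l _; rewrite !mxE.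
have ebj : betaj = invmx S *m bp by rewrite -hbj mulKmx.
have ed : bt - betaj = - x *: (invmx S *m g).
  rewrite -[bt - betaj](mulKmx uS) mulmxBr hbj -R2 opprD addrA subrr add0r.
  by rewrite mulmxN -scalemxAr scaleNr.
rewrite Qdiff // ed.
have hSi : (invmx S)^T = invmx S by rewrite trmx_inv hS.
set q := (g^T *m invmx S *m g) 0 0.
have e1 : ((- x *: (invmx S *m g))^T *m S *m (- x *: (invmx S *m g))) 0 0 = x ^+ 2 * q.
  have -> : (- x *: (invmx S *m g))^T = - x *: (invmx S *m g)^T by apply/matrixP => a c; rewrite !mxE.
  rewrite -!scalemxAl -!scalemxAr !e00Z -mulmxA mulKVmx // trmx_mul hSi /q.
  by rewrite mulrA mulrNN -expr2.
rewrite e1.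
have e2 : (g^T *m bt) 0 0 = (g^T *m invmx S *m bp) 0 0 - x * q.
  have -> : bt = betaj - x *: (invmx S *m g).
    by rewrite -[bt](subrK betaj) ed scaleNr addrC.
  by rewrite mulmxBr e00B -scalemxAr e00Z ebj mulmxA /q mulmxA.
rewrite e2 in R1.
have hne : M j j - q != 0 by rewrite gt_eqF.
rewrite -R1.
by field.
Qed.
End LA.
Arguments Qf {R m}. Arguments subm {R n}. Arguments gam {R n}. Arguments posdef_sub {R n}.
Arguments final {R n}. Arguments foc {R m}. Arguments dot_sum {R m}. Arguments bil_sum {R m}.
Lemma Qf_sum (R : realType) m (M : 'M[R]_m) (b w : 'cV[R]_m) :
  Qf M b w = -2 * \sum_i w i 0 * b i 0 + \sum_i \sum_k w i 0 * M i k * w k 0.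
Proof. by rewrite /Qf dot_sum bil_sum. Qed.

Lemma sqloss_Qf (R : realType) (d : measure_display) (T : measurableType d) (P : probability T R)
  m (X : 'I_m -> T -> R) (Y : T -> R) (w : 'cV[R]_m) :
  (forall i, X i \in Lfun P 2%:E) -> Y \in Lfun P 2%:E ->
  sqloss P X Y w = Ex P (fun t => Y t * Y t)
    + Qf (second_moment P X) (\col_i Ex P (fun t => X i t * Y t)) w.
Proof.
move=> hX hY; rewrite sqloss_quad // Qf_sum; congr (_ + (_ * _ + _)).
  by apply: eq_bigr => i _; rewrite mxE.
by apply: eq_bigr => i _; apply: eq_bigr => k _; rewrite mxE.
Qed.

Theorem proposition1 (R : realType) (d : measure_display) (T : measurableType d)
  (P : probability T R) (n : nat)
  (X : 'I_n.+1 -> {RV P >-> R}) (Y : {RV P >-> R})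
  (hX2 : forall i, (X i : T -> R) \in Lfun P 2)
  (hY2 : ('E_P[(fun t => (Y t ^+ 2)%R)] < +oo)%E)
  (hgauss : centered_gaussian P (fun i => X i : T -> R) (second_moment P (fun i => X i : T -> R)))
  (hpd : posdef (second_moment P (fun i => X i : T -> R)))
  (beta : 'cV[R]_n.+1) (j : 'I_n.+1) (betaj : 'cV[R]_n)
  (hbeta : is_argmin_sqloss P (fun i => X i : T -> R) Y beta)
  (hbetaj : is_argmin_sqloss P (drop_rv j (fun i => X i : T -> R)) Y betaj) :
  let XX := (fun i => X i : T -> R) in
  let Sigma := second_moment P XX in
  let Sigmaj : 'M[R]_n := \matrix_(i, k) Sigma (lift j i) (lift j k) in
  let gamma : 'cV[R]_n := \col_i Ex P (fun t => XX j t * XX (lift j i) t) in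
  let EXY : 'cV[R]_n := \col_i Ex P (fun t => XX (lift j i) t * Y t) in
  let q := (gamma^T *m invmx Sigmaj *m gamma) 0 0 in
  let VI_DR := sqloss P (drop_rv j XX) Y (drop_vec j beta) - sqloss P XX Y beta in
  let VI_RT := sqloss P (drop_rv j XX) Y betaj - sqloss P XX Y beta in
  VI_DR - VI_RT =
    q / (Sigma j j - q) ^+ 2 *
    (Ex P (fun t => XX j t * Y t) - (gamma^T *m invmx Sigmaj *m EXY) 0 0) ^+ 2.
Proof.
move=> XX Sigma Sigmaj gamma EXY q VI_DR VI_RT.
have hY : (Y : T -> R) \in Lfun P 2%:E := @L2_of_sq _ _ _ _ Y hY2.
have hX : forall i, XX i \in Lfun P 2%:E by move=> i; exact: hX2.
have hXd : forall i, drop_rv j XX i \in Lfun P 2%:E by move=> i; exact: hX2.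
set b : 'cV[R]_n.+1 := \col_a Ex P (fun t => XX a t * Y t).
have hSym : Sigma^T = Sigma by case: hpd.
have hfoc : Sigma *m beta = b.
  apply: foc => // v; have := hbeta v; rewrite !(@sqloss_Qf _ _ _ P _ _ _ _ hX hY).
  by rewrite lerD2l.
have eSd : second_moment P (drop_rv j XX) = subm Sigma j.
  by apply/matrixP => i k; rewrite !mxE.
have ebd : \col_i Ex P (fun t => drop_rv j XX i t * Y t) = \col_i b (lift j i) 0.
  by apply/matrixP => i k; rewrite !mxE.
have [hSj _] := posdef_sub Sigma j hpd.
have hfocj : subm Sigma j *m betaj = \col_i b (lift j i) 0.
  apply: foc => // v; have := hbetaj v; rewrite !(@sqloss_Qf _ _ _ P _ _ _ _ hXd hY).
  by rewrite lerD2l eSd ebd.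
have eg : gamma = gam Sigma j by apply/matrixP => i k; rewrite !mxE.
have eE : EXY = \col_i b (lift j i) 0 by apply/matrixP => i k; rewrite !mxE.
have eb : Ex P (fun t => XX j t * Y t) = b j 0 by rewrite mxE.
rewrite /q eg eE eb /Sigmaj -/(subm Sigma j) /VI_DR /VI_RT.
rewrite opprB addrA subrK !(@sqloss_Qf _ _ _ P _ _ _ _ hXd hY) eSd ebd.
rewrite (addrC (Ex P _)) addrKA.
exact: final.
Qed.
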